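(* The RHA process is pseudo-asymptotically mean stationary: for every $m\ge1$ and every string $x_{1:m}$ the limit $\mu(x_{1:m})=\lim_{N\to\infty}\frac1N\sum_{i=1}^N P(X_{i:i+m-1}=x_{1:m})$ exists. Moreover, for all $n\ge0$ with $m\le 2^n$ and all $k\in\mathbb N$ ($k\ge1$), $$\mu(x_{1:m})=\frac{1}{2^n}\sum_{j=0}^{2^n-1}P\big(X_{k2^n+j:k2^n+j+m-1}=x_{1:m}\big).$$
   Context: Random hierarchical association (RHA) process. Fix positive integers $(k_n)_{n\ge0}$ (perplexities) with $k_{n-1}\le k_n\le k_{n-1}^2$ for all $n\ge1$. On a probability space $(\Omega,\mathcal J,P)$ let, for each $n\ge1$, $(L_{nj},R_{nj})_{j=1}^{k_n}$ be the lexicographically sorted enumeration of a uniformly random $k_n$-element subset of $\{1,\dots,k_{n-1}\}^2$ (each of the $\binom{k_{n-1}^2}{k_n}$ subsets equally likely), independently over $n$. Let $(C_n)_{n\ge0}$ be independent, independent of all $(L_{nj},R_{nj})$, with $C_n$ uniform on $\{1,\dots,k_n\}$. Define strings $Y^0_j=j$ (length 1) for $1\le j\le k_0$ and $Y^n_j=Y^{n-1}_{L_{nj}}Y^{n-1}_{R_{nj}}$ (concatenation) for $n\ge1$, $1\le j\le k_n$; so $Y^n_1,\dots,Y^n_{k_n}$ are distinct strings of length $2^n$ over $\{1,\dots,k_0\}$. The RHA process is the infinite sequence $\mathcal X=Y^0_{C_0}Y^1_{C_1}Y^2_{C_2}\cdots=X_1X_2X_3\cdots$ with $X_i\in\{1,\dots,k_0\}$,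 and $X_{k:l}=X_kX_{k+1}\cdots X_l$. *)

(* Defs.v *)
From mathcomp Require Import all_boot.
From Stdlib Require Import Reals.

Set Implicit Arguments.
Unset Strict Implicit.
Unset Printing Implicit Defensive.

Definition lexle (p q : nat * nat) : bool :=
  (p.1 < q.1)%N || ((p.1 == q.1) && (p.2 <= q.2)%N).

(* A realization of the randomness of levels 0..L.  Symbols / indices are
   0-based ordinals bounded by a common bound M (>= every k_n, n <= L):
   - c.1 n  (n < L) is the random subset drawn at level n+1 (a subset of
     {0..k_n - 1}^2, of size k_(n+1));
   - c.2 n  (n <= L) is C_n (0-based, < k_n). *)
Definition cfg (L M : nat) : finType :=
  ({ffun 'I_L -> {set 'I_M * 'I_M}} * {ffun 'I_L.+1 -> 'I_M})%type.

(* Validity = membership in the support of the product of uniform laws. *)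
Definition valid (k : nat -> nat) (L M : nat) (c : cfg L M) : bool :=
  [forall n : 'I_L,
     ([forall p in c.1 n, (p.1 < k n)%N && (p.2 < k n)%N])
     && (#|c.1 n| == k n.+1)]
  && [forall n : 'I_L.+1, (c.2 n < k n)%N].

(* Lexicographically sorted enumeration (L_{n+1,j}, R_{n+1,j})_j (0-based). *)
Definition pairs (L M : nat) (c : cfg L M) (n : nat) : seq (nat * nat) :=
  match @insub nat (fun t => (t < L)%N) 'I_L n with
  | Some o => sort lexle [seq (nat_of_ord p.1, nat_of_ord p.2) | p <- enum (c.1 o)]
  | None => [::]
  end.

(* C_n (0-based). *)
Definition Cn (L M : nat) (c : cfg L M) (n : nat) : nat :=
  match @insub nat (fun t => (t < L.+1)%N) 'I_L.+1 n with
  | Some o => nat_of_ord (c.2 o)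
  | None => 0
  end.

(* Y^n_{j+1} as a string over {1..k_0} (index j is 0-based). *)
Fixpoint Y (L M : nat) (c : cfg L M) (n j : nat) : seq nat :=
  match n with
  | 0 => [:: j.+1]
  | n'.+1 =>
      let p := nth (0, 0) (pairs c n') j in
      Y c n' p.1 ++ Y c n' p.2
  end.

(* Prefix Y^0_{C_0} Y^1_{C_1} ... Y^L_{C_L} of the RHA process
   (length 2^(L+1) - 1). *)
Definition Xpref (L M : nat) (c : cfg L M) : seq nat :=
  flatten [seq Y c n (Cn c n) | n <- iota 0 L.+1].

(* X_{i:i+m-1} (positions 1-based). *)
Definition window (L M : nat) (c : cfg L M) (i m : nat) : seq nat :=
  take m (drop i.-1 (Xpref c)).

(* P(X_{i:i+size x-1} = x): the event only depends on levels 0..L with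
   L := i + size x (since 2^(L+1)-1 >= i + size x - 1), so its probability is
   the proportion of valid level-0..L configurations realising it (the law of
   the randomness of these levels is the uniform law on valid configurations). *)
Definition Pwin (k : nat -> nat) (i : nat) (x : seq nat) : R :=
  let L := (i + size x)%N in
  let M := (\max_(n < L.+1) k n)%N in
  Rdiv (INR #|[set c : cfg L M | valid k c && (window c i (size x) == x)]|)
       (INR #|[set c : cfg L M | valid k c]|).

Fixpoint sumR (f : nat -> R) (N : nat) : R :=
  match N with
  | 0 => 0%R
  | N'.+1 => (sumR f N' + f N')%R
  end.

(* Main.v *)
Require Import Defs.
From mathcomp Require Import all_boot.
From Stdlib Require Import Reals.
From mathcomp Require Import zify.
From Stdlib Require Import Lia Lra.

Set Implicit Arguments.
Unset Strict Implicit.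
Unset Printing Implicit Defensive.


Section Struct.
Local Notation "x ^ y" := (expn x y) : nat_scope.
Variables (L M : nat) (c : cfg L M).

Lemma size_Y n j : size (Y c n j) = 2 ^ n.
Proof. elim: n j => [|n IH] j //=. by rewrite size_cat !IH expnS mul2n addnn. Qed.

Definition child n (b : bool) j :=
  let q := nth (0,0) (pairs c n) j in if b then q.2 else q.1.

Lemma YS n j : Y c n.+1 j = Y c n (child n false j) ++ Y c n (child n true j).
Proof. by []. Qed.

Fixpoint bidx (f n kk : nat) : nat :=
  match f with
  | 0 => 0
  | f'.+1 => if kk <= 1 then Cn c n else child n (odd kk) (bidx f' n.+1 kk./2)
  end.

Lemma bidx_fuel f f' n kk : 1 <= kk -> kk <= f -> kk <= f' -> bidx f n kk = bidx f' n kk.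
Proof.
elim: f f' n kk => [|f IH] [|f'] n kk //=; try lia.
move=> h1 h2 h3; case: ifP => // hk; congr child; apply: IH; lia.
Qed.

Definition blk n kk := bidx kk n kk.

Lemma blk1 n : blk n 1 = Cn c n. Proof. by []. Qed.

Lemma blkS n kk : 2 <= kk -> blk n kk = child n (odd kk) (blk n.+1 kk./2).
Proof.
move=> h; rewrite /blk; case: kk h => [|kk] //= h.
rewrite ifF; last lia.
congr child; apply: bidx_fuel; lia.
Qed.

Lemma size_flat f n : size (flatten [seq Y c l (f l) | l <- iota 0 n]) = 2 ^ n - 1.
Proof.
elim: n => [|n IH] //.
rewrite -addn1 iotaD map_cat flatten_cat size_cat IH /= cats0 size_Y add0n.
have := expn_gt0 2 n; rewrite expnD expn1; lia.
Qed.

Definition X := Xpref c.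

Lemma Xblock0 n : n <= L -> take (2 ^ n) (drop (2 ^ n - 1) X) = Y c n (Cn c n).
Proof.
move=> hn; rewrite /X /Xpref.
have -> : L.+1 = n + (L - n).+1 by lia.
rewrite iotaD map_cat flatten_cat drop_size_cat ?size_flat //= add0n.
by rewrite take_size_cat // size_Y.
Qed.

Lemma Xblock f n kk : 1 <= kk -> kk <= f -> kk * 2 ^ n < 2 ^ L.+1 ->
  take (2 ^ n) (drop (kk * 2 ^ n - 1) X) = Y c n (bidx f n kk).
Proof.
elim: f n kk => [|f IH] n kk h1 h2 h3; first lia.
rewrite /=; case: ifP => hk.
  have ek : kk = 1 by lia.
  subst kk; rewrite mul1n Xblock0 //.
  rewrite mul1n ltn_exp2l in h3; lia.
have e := odd_double_half kk.
set p := kk./2 in e *; set b := odd kk in e *.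
have hp1 : 1 <= p by lia.
have e2 : 2 ^ n.+1 = 2 ^ n + 2 ^ n by rewrite expnS; lia.
have hp3 : p * 2 ^ n.+1 < 2 ^ L.+1.
  rewrite e2; have := expn_gt0 2 n; nia.
have := IH n.+1 p hp1 ltac:(lia) hp3; rewrite YS => HI.
set D := drop (p * 2 ^ n.+1 - 1) X in HI.
have hpos := expn_gt0 2 n.
case hb: b e => e.
  have -> : kk * 2 ^ n - 1 = 2 ^ n + (p * 2 ^ n.+1 - 1) by rewrite e2; nia.
  rewrite -drop_drop -/D take_drop.
  rewrite -(take_takel _ (_ : 2 ^ n + 2 ^ n <= 2 ^ n.+1)); last lia.
  by rewrite HI take_oversize ?size_cat ?size_Y // drop_size_cat ?size_Y.
have -> : kk * 2 ^ n - 1 = p * 2 ^ n.+1 - 1 by rewrite e2; nia.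
rewrite -/D -(take_takel _ (_ : 2 ^ n <= 2 ^ n.+1)); last lia.
by rewrite HI take_size_cat ?size_Y.
Qed.

Lemma window_blk n kk j m : 1 <= kk -> j < 2 ^ n -> 1 <= m <= 2 ^ n ->
  (kk.+1) * 2 ^ n < 2 ^ L.+1 ->
  window c (kk * 2 ^ n + j) m = take m (drop j (Y c n (blk n kk) ++ Y c n (blk n kk.+1))).
Proof.
move=> h1 hj hm h3.
have hpos := expn_gt0 2 n.
rewrite /window.
have -> : (kk * 2 ^ n + j).-1 = j + (kk * 2 ^ n - 1) by nia.
rewrite -drop_drop -/X.
set D := drop _ X.
rewrite take_drop -(take_takel _ (_ : m + j <= 2 ^ n + 2 ^ n)); last lia.
rewrite (takeD (2 ^ n) (2 ^ n)) /D (Xblock (f:=kk)) //; try nia.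
rewrite drop_drop.
have -> : 2 ^ n + (kk * 2 ^ n - 1) = kk.+1 * 2 ^ n - 1 by nia.
rewrite (Xblock (f:=kk.+1)) //; try nia.
by rewrite -take_drop.
Qed.

End Struct.


Section Resample.
Variables (T X : finType) (pi : T -> X) (up : T -> X -> T) (V : {set T}) (D : {set X}).
Hypotheses (hV : forall c, c \in V -> pi c \in D)
  (hU : forall c x, c \in V -> x \in D -> up c x \in V)
  (hpu : forall c x, pi (up c x) = x)
  (huu : forall c x y, up (up c x) y = up c y)
  (hup : forall c, up c (pi c) = c).

Let W x := [set c in V | pi c == x].

Lemma resample (H : T -> X -> nat) :
  (forall c x y, H (up c y) x = H c x) ->
  #|D| * \sum_(c in V) H c (pi c) = \sum_(c in V) \sum_(x in D) H c x.
Proof.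
move=> hH.
have part : forall G : T -> nat,
    \sum_(c in V) G c = \sum_(x in D) \sum_(c in W x) G c.
  move=> G; rewrite (partition_big pi (mem D)); last by move=> c /hV.
  by apply: eq_bigr => x _; apply: eq_bigl => c; rewrite inE.
have A : forall x y, x \in D -> y \in D ->
    \sum_(c in W y) H c x = \sum_(c in W x) H c x.
  move=> x y hx hy.
  have -> : W y = (up^~ y) @: W x.
    apply/setP => c; apply/idP/imsetP.
      rewrite inE => /andP [hc /eqP hpc]; exists (up c x).
        by rewrite inE hU // hpu eqxx.
      by rewrite huu -hpc hup.
    case=> c' ; rewrite inE => /andP [hc' _] ->.
    by rewrite inE hU // hpu eqxx.
  rewrite big_imset /=; first by apply: eq_bigr => c _; rewrite hH.
  move=> c1 c2; rewrite !inE => /andP [_ /eqP h1] /andP [_ /eqP h2] e.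
  have E1 : c1 = up (up c1 y) x by rewrite huu -h1 hup.
  have E2 : c2 = up (up c2 y) x by rewrite huu -h2 hup.
  by rewrite E1 E2 e.
rewrite exchange_big /= (part (fun c => H c (pi c))) big_distrr /=.
apply: eq_bigr => x hx.
rewrite (part (fun c => H c x)) -sum_nat_const.
apply: eq_bigr => y hy; rewrite (A x y) //.
by apply: eq_bigr => c; rewrite inE => /andP [_ /eqP ->].
Qed.
End Resample.


Section Cfg.
Variable k : nat -> nat.
Variables L M : nat.
Local Notation cT := (cfg L M).

Definition setS (c : cT) (o : 'I_L) (S : {set 'I_M * 'I_M}) : cT :=
  ([ffun j => if j == o then S else c.1 j], c.2).
Definition setC (c : cT) (o : 'I_L.+1) (a : 'I_M) : cT :=
  (c.1, [ffun j => if j == o then a else c.2 j]).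
Definition VS (K k' : nat) : {set {set 'I_M * 'I_M}} :=
  [set S : {set 'I_M * 'I_M} | [forall p in S, (p.1 < K) && (p.2 < K)] && (#|S| == k')].
Definition DC (K : nat) : {set 'I_M} := [set a : 'I_M | a < K].
Definition Vs : {set cT} := [set c | valid k c].

Lemma validP (c : cT) : reflect ((forall o : 'I_L, c.1 o \in VS (k o) (k o.+1))
   /\ (forall o : 'I_L.+1, c.2 o \in DC (k o))) (valid k c).
Proof.
apply: (iffP andP) => [[/forallP h1 /forallP h2]|[h1 h2]]; split.
- by move=> o; rewrite inE; apply: h1.
- by move=> o; rewrite inE; apply: h2.
- by apply/forallP => o; have := h1 o; rewrite inE.
- by apply/forallP => o; have := h2 o; rewrite inE.
Qed.

Lemma resampleS (o : 'I_L) (H : cT -> {set 'I_M * 'I_M} -> nat) :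
  (forall c S S', H (setS c o S') S = H c S) ->
  #|VS (k o) (k o.+1)| * \sum_(c in Vs) H c (c.1 o)
  = \sum_(c in Vs) \sum_(S in VS (k o) (k o.+1)) H c S.
Proof.
move=> hH; apply: (resample (up := fun c S => setS c o S)) => //.
- by move=> c; rewrite inE => /validP [h _]; apply: h.
- move=> c S; rewrite inE => /validP [h1 h2] hS; rewrite inE; apply/validP; split => // o'.
  by rewrite /= ffunE; case: eqP => [->|_]; [exact: hS | first [exact: h1 | exact: h2]].
- by move=> c S; rewrite /= ffunE eqxx.
- move=> c S S'; rewrite /setS /=; congr pair; apply/ffunP => j.
  by rewrite !ffunE; case: eqP.
- case=> c1 c2; rewrite /setS /=; congr pair; apply/ffunP => j.
  by rewrite !ffunE; case: eqP => [->|].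
Qed.

Lemma cardDC K : K <= M -> #|DC K| = K.
Proof.
move=> hK; rewrite -sum1_card.
rewrite (eq_bigl (fun a : 'I_M => a < K)); last by move=> a; rewrite inE.
by rewrite -(big_ord_widen _ (fun _ => 1) hK) sum1_card card_ord.
Qed.

Lemma resampleC (o : 'I_L.+1) (H : cT -> nat -> nat) : k o <= M ->
  (forall c x a, H (setC c o a) x = H c x) ->
  k o * \sum_(c in Vs) H c (c.2 o)
  = \sum_(c in Vs) \sum_(a : 'I_M | a < k o) H c a.
Proof.
move=> hk hH; rewrite -{1}(cardDC hk).
rewrite (@resample _ _ (fun c : cT => c.2 o) (fun (c : cT) (a : 'I_M) => setC c o a)
    Vs (DC (k o)) _ _ _ _ _ (fun c (a : 'I_M) => H c a)).
- by apply: eq_bigr => c _; apply: eq_bigl => a; rewrite inE.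
- by move=> c; rewrite inE => /validP [_ h]; apply: h.
- move=> c S; rewrite inE => /validP [h1 h2] hS; rewrite inE; apply/validP; split => // o'.
  by rewrite /= ffunE; case: eqP => [->|_]; [exact: hS | first [exact: h1 | exact: h2]].
- by move=> c S; rewrite /= ffunE eqxx.
- move=> c S S'; rewrite /setC /=; congr pair; apply/ffunP => j.
  by rewrite !ffunE; case: eqP.
- case=> c1 c2; rewrite /setC /=; congr pair; apply/ffunP => j.
  by rewrite !ffunE; case: eqP => [->|].
- by move=> c x y; apply: hH.
Qed.

Definition natlist (S : {set 'I_M * 'I_M}) : seq (nat * nat) :=
  sort lexle [seq (nat_of_ord p.1, nat_of_ord p.2) | p <- enum S].

Lemma pairsE (c : cT) (o : 'I_L) : pairs c o = natlist (c.1 o).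
Proof.
rewrite /pairs; case: insubP => [u _ /val_inj -> //|]; by rewrite ltn_ord.
Qed.

Lemma pairs_ge (c : cT) l : L <= l -> pairs c l = [::].
Proof. by move=> h; rewrite /pairs insubF // ltnNge h. Qed.

Lemma CnE (c : cT) (o : 'I_L.+1) : Cn c o = c.2 o.
Proof.
rewrite /Cn; case: insubP => [u _ /val_inj -> //|]; by rewrite ltn_ord.
Qed.

Lemma Cn_ge (c : cT) l : L < l -> Cn c l = 0.
Proof. by move=> h; rewrite /Cn insubF // ltnNge h. Qed.

Lemma pairs_setS_ord (c : cT) o S (o2 : 'I_L) :
  pairs (setS c o S) o2 = if o2 == o then natlist S else pairs c o2.
Proof. by rewrite !pairsE /= ffunE; case: eqP. Qed.

Lemma pairs_setS (c : cT) o S l :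
  pairs (setS c o S) l = if l == o then natlist S else pairs c l.
Proof.
case: (ltnP l L) => hl.
  exact: (pairs_setS_ord c o S (Ordinal hl)).
rewrite !pairs_ge //; case: eqP => // e; move: (ltn_ord o); lia.
Qed.

Lemma pairs_setC (c : cT) o a l : pairs (setC c o a) l = pairs c l.
Proof. by []. Qed.

Lemma Cn_setS (c : cT) o S l : Cn (setS c o S) l = Cn c l.
Proof. by []. Qed.

Lemma Cn_setC_ord (c : cT) o a (o2 : 'I_L.+1) :
  Cn (setC c o a) o2 = if o2 == o then nat_of_ord a else Cn c o2.
Proof. by rewrite !CnE /= ffunE; case: eqP. Qed.

Lemma Cn_setC (c : cT) o a l : Cn (setC c o a) l = if l == o then nat_of_ord a else Cn c l.
Proof.
case: (ltnP l L.+1) => hl.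
  exact: (Cn_setC_ord c o a (Ordinal hl)).
rewrite !Cn_ge //; case: eqP => // e; move: (ltn_ord o); lia.
Qed.

Lemma sum_child S K k' (g : nat -> nat -> nat) : k' <= M -> S \in VS K k' ->
  \sum_(a : 'I_M | a < k') g (nth (0,0) (natlist S) a).1 (nth (0,0) (natlist S) a).2
  = \sum_(q in S) g q.1 q.2.
Proof.
move=> hk; rewrite inE => /andP [_ /eqP hS].
rewrite -(big_ord_widen _ (fun a => g (nth (0,0) (natlist S) a).1
                                      (nth (0,0) (natlist S) a).2) hk).
have hs : size (natlist S) = k' by rewrite size_sort size_map -cardE.
rewrite -hs -(big_mkord xpredT (fun a => g (nth (0,0) (natlist S) a).1
                                      (nth (0,0) (natlist S) a).2)).
rewrite -(big_nth (0,0) xpredT (fun p => g p.1 p.2)).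
rewrite (perm_big _ (permEl (perm_sort _ _))) big_map /=.
by rewrite big_enum.
Qed.

End Cfg.


Section Sym.
Variables (M K k' : nat).
Hypothesis hK : K <= M.
Local Notation VSK := (VS M K k').
Local Notation sT := {set 'I_M * 'I_M}.

Definition side (b : bool) (q : 'I_M * 'I_M) := if b then q.2 else q.1.
Definition W1 (S : sT) (x y : 'I_M) := \sum_(q in S) ((q.1 == x) * (q.2 == y)).
Definition W2 (S : sT) b (x : 'I_M) := \sum_(q in S) (side b q == x : nat).

Definition swp (x y z : 'I_M) := if z == x then y else if z == y then x else z.
Lemma swpK (x y : 'I_M) : involutive (swp x y).
Proof. move=> z; rewrite /swp; do ! case: eqP => //; congruence. Qed.
Lemma swp_inj (x y : 'I_M) : injective (swp x y).
Proof. exact: inv_inj (swpK x y). Qed.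
Lemma swpL (x y : 'I_M) : swp x y x = y. Proof. by rewrite /swp eqxx. Qed.
Lemma swp_pres (x y : 'I_M) z : x < K -> y < K -> (swp x y z < K) = (z < K).
Proof. move=> hx hy; rewrite /swp; do ! case: eqP => [->|] //; by rewrite ?hx ?hy. Qed.

Variables (s t : 'I_M -> 'I_M).
Hypotheses (si : injective s) (ti : injective t)
  (sp : forall z, (s z < K) = (z < K)) (tp : forall z, (t z < K) = (z < K)).

Definition fst_ (q : 'I_M * 'I_M) := (t q.1, s q.2).
Lemma fst_inj : injective fst_.
Proof. by case=> a b [c d] [/ti -> /si ->]. Qed.
Definition phi (S : sT) : sT := fst_ @: S.

Lemma phi_VS S : (phi S \in VSK) = (S \in VSK).
Proof.
rewrite !inE card_imset; last exact: fst_inj.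
congr andb; apply/forallP/forallP => h q.
  by apply/implyP => hq; have := h (fst_ q); rewrite (imset_f _ hq) /= tp sp.
apply/implyP => /imsetP [q' hq' ->] /=; rewrite tp sp.
by have := h q'; rewrite hq'.
Qed.

Lemma sum_phi (F : sT -> nat) : \sum_(S in VSK) F S = \sum_(S in VSK) F (phi S).
Proof.
rewrite (reindex_inj (imset_inj fst_inj)) /=.
by apply: eq_bigl => S; rewrite -/(phi S) phi_VS.
Qed.

Lemma W2_phi_true S x : W2 (phi S) true (s x) = W2 S true x.
Proof.
rewrite /W2 /phi big_imset /=; last by move=> ? ? _ _; apply: fst_inj.
by apply: eq_bigr => q _; rewrite (inj_eq si).
Qed.

Lemma W2_phi_false S x : W2 (phi S) false (t x) = W2 S false x.
Proof.
rewrite /W2 /phi big_imset /=; last by move=> ? ? _ _; apply: fst_inj.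
by apply: eq_bigr => q _; rewrite (inj_eq ti).
Qed.

Lemma W1_phi S x y : W1 (phi S) (t x) (s y) = W1 S x y.
Proof.
rewrite /W1 /phi big_imset /=; last by move=> ? ? _ _; apply: fst_inj.
by apply: eq_bigr => q _; rewrite (inj_eq si) (inj_eq ti).
Qed.

End Sym.


Section Sym2.
Variables (M K k' : nat).
Hypothesis hK : K <= M.
Local Notation VSK := (VS M K k').

Lemma sum_lt_const (G : 'I_M -> nat) (x0 : 'I_M) : x0 < K ->
  (forall x : 'I_M, x < K -> G x = G x0) ->
  \sum_(x : 'I_M | x < K) G x = K * G x0.
Proof.
move=> h0 h; rewrite (eq_bigr (fun _ => G x0)) //.
rewrite (eq_bigl (fun x => x \in DC M K)) ?sum_nat_const ?cardDC // => x.
by rewrite inE.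
Qed.

Lemma sum_delta (y : 'I_M) : \sum_(x : 'I_M | x < K) (y == x : nat) = (y < K).
Proof.
case: (boolP (y < K)) => hy.
  rewrite (bigD1 y) //= eqxx big1 // => x /andP [_ hx].
  by rewrite eq_sym (negbTE hx).
by rewrite big1 // => x hx; case: eqP => // e; subst; rewrite hx in hy.
Qed.

Lemma VS_elts S q : S \in VSK -> q \in S -> (q.1 < K) && (q.2 < K).
Proof. by rewrite inE => /andP [/forallP h _] hq; have := h q; rewrite hq. Qed.

Lemma VS_card S : S \in VSK -> #|S| = k'.
Proof. by rewrite inE => /andP [_ /eqP]. Qed.

Lemma W2_tot S b : S \in VSK -> \sum_(x : 'I_M | x < K) W2 S b x = k'.
Proof.
move=> hS; rewrite /W2 exchange_big /= -(VS_card hS) -sum1_card.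
apply: eq_bigr => q hq; rewrite sum_delta.
by have /andP [h1 h2] := VS_elts hS hq; case: b; rewrite /side ?h1 ?h2.
Qed.

Lemma W1_tot S : S \in VSK ->
  \sum_(x : 'I_M | x < K) \sum_(y : 'I_M | y < K) W1 S x y = k'.
Proof.
move=> hS; rewrite /W1.
rewrite (eq_bigr (fun x : 'I_M => \sum_(q in S) ((q.1 == x) * (q.2 < K)))); last first.
  move=> x _; rewrite exchange_big /=; apply: eq_bigr => q _.
  by rewrite -big_distrr /= sum_delta.
rewrite exchange_big /= -(VS_card hS) -sum1_card.
apply: eq_bigr => q hq; rewrite -big_distrl /= sum_delta.
by have /andP [h1 h2] := VS_elts hS hq; rewrite h1 h2.
Qed.

Lemma W3_tot S : S \in VSK ->
  \sum_(x : 'I_M | x < K) \sum_(y : 'I_M | y < K) (W2 S true x * W2 S false y) = k' * k'.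
Proof.
move=> hS; rewrite -{1}(W2_tot true hS) big_distrl /=; apply: eq_bigr => x _.
by rewrite -big_distrr /= (W2_tot false hS).
Qed.

Let sp (x y : 'I_M) : x < K -> y < K -> forall z, (swp x y z < K) = (z < K).
Proof. by move=> hx hy z; apply: swp_pres. Qed.
Let idm := fun z : 'I_M => z.
Let ip : forall z : 'I_M, (idm z < K) = (z < K). Proof. by []. Qed.
Let idi : injective idm. Proof. by move=> a b. Qed.

Lemma G2_const b (x x' : 'I_M) : x < K -> x' < K ->
  \sum_(S in VSK) W2 S b x' = \sum_(S in VSK) W2 S b x.
Proof.
move=> hx hx'; case: b.
  rewrite (sum_phi k' (@swp_inj _ x x') idi (sp hx hx') ip).
  by apply: eq_bigr => S _; have := W2_phi_true (@swp_inj _ x x') idi S x; rewrite swpL.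
rewrite (sum_phi k' idi (@swp_inj _ x x') ip (sp hx hx')).
by apply: eq_bigr => S _; have := W2_phi_false idi (@swp_inj _ x x') S x; rewrite swpL.
Qed.

Lemma G1_const (x y x' y' : 'I_M) : x < K -> y < K -> x' < K -> y' < K ->
  \sum_(S in VSK) W1 S x' y' = \sum_(S in VSK) W1 S x y.
Proof.
move=> hx hy hx' hy'.
rewrite (sum_phi k' (@swp_inj _ y y') (@swp_inj _ x x') (sp hy hy') (sp hx hx')).
by apply: eq_bigr => S _; have := W1_phi (@swp_inj _ y y') (@swp_inj _ x x') S x y; rewrite !swpL.
Qed.

Lemma G3_const (x y x' y' : 'I_M) : x < K -> y < K -> x' < K -> y' < K ->
  \sum_(S in VSK) (W2 S true x' * W2 S false y')
  = \sum_(S in VSK) (W2 S true x * W2 S false y).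
Proof.
move=> hx hy hx' hy'.
rewrite (sum_phi k' (@swp_inj _ x x') (@swp_inj _ y y') (sp hx hx') (sp hy hy')).
apply: eq_bigr => S _.
have := W2_phi_true (@swp_inj _ x x') (@swp_inj _ y y') S x.
have := W2_phi_false (@swp_inj _ x x') (@swp_inj _ y y') S y.
by rewrite !swpL => -> ->.
Qed.

Lemma Sym2 b (x : 'I_M) : x < K -> K * \sum_(S in VSK) W2 S b x = k' * #|VSK|.
Proof.
move=> hx; rewrite -(sum_lt_const (G := fun x => \sum_(S in VSK) W2 S b x) hx);
  last by move=> x' hx'; apply: G2_const.
rewrite exchange_big /= [RHS]mulnC -sum_nat_const; apply: eq_bigr => S hS.
exact: W2_tot.
Qed.

Lemma Sym1 (x y : 'I_M) : x < K -> y < K ->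
  K * K * \sum_(S in VSK) W1 S x y = k' * #|VSK|.
Proof.
move=> hx hy.
rewrite -mulnA -(sum_lt_const (G := fun y => \sum_(S in VSK) W1 S x y) hy);
  last by move=> y' hy'; apply: G1_const.
rewrite big_distrr /=.
rewrite (eq_bigr (fun y' : 'I_M => \sum_(x' : 'I_M | x' < K) \sum_(S in VSK) W1 S x' y')); last first.
  move=> y' hy'; rewrite (sum_lt_const (G := fun x => \sum_(S in VSK) W1 S x y') hx) //.
  by move=> x' hx'; apply: G1_const.
rewrite exchange_big /=.
rewrite (eq_bigr (fun x' : 'I_M => \sum_(S in VSK) \sum_(y' : 'I_M | y' < K) W1 S x' y')); last first.
  by move=> x' _; rewrite exchange_big.
rewrite exchange_big /= [RHS]mulnC -sum_nat_const; apply: eq_bigr => S hS.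
exact: W1_tot.
Qed.

Lemma Sym3 (x y : 'I_M) : x < K -> y < K ->
  K * K * \sum_(S in VSK) (W2 S true x * W2 S false y) = k' * k' * #|VSK|.
Proof.
move=> hx hy.
rewrite -mulnA -(sum_lt_const
   (G := fun y => \sum_(S in VSK) (W2 S true x * W2 S false y)) hy);
  last by move=> y' hy'; apply: G3_const.
rewrite big_distrr /=.
rewrite (eq_bigr (fun y' : 'I_M => \sum_(x' : 'I_M | x' < K)
    \sum_(S in VSK) (W2 S true x' * W2 S false y'))); last first.
  move=> y' hy'; rewrite (sum_lt_const
    (G := fun x => \sum_(S in VSK) (W2 S true x * W2 S false y')) hx) //.
  by move=> x' hx'; apply: G3_const.
rewrite exchange_big /=.
rewrite (eq_bigr (fun x' : 'I_M => \sum_(S in VSK)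
    \sum_(y' : 'I_M | y' < K) (W2 S true x' * W2 S false y'))); last first.
  by move=> x' _; rewrite exchange_big.
rewrite exchange_big /= [RHS]mulnC -sum_nat_const; apply: eq_bigr => S hS.
exact: W3_tot.
Qed.

End Sym2.


Section Split.
Variables (M K k' : nat).
Local Notation VSK := (VS M K k').

Lemma sum_delta_w (G : 'I_M -> nat) (y : 'I_M) :
  \sum_(x : 'I_M | x < K) G x * (y == x) = G y * (y < K).
Proof.
case: (boolP (y < K)) => hy.
  rewrite (bigD1 y) //= eqxx muln1 big1 ?addn0 ?muln1 // => x /andP [_ hx].
  by rewrite eq_sym (negbTE hx) muln0.
rewrite muln0 big1 // => x hx; case: eqP => [e|]; last by rewrite muln0.
by subst; rewrite hx in hy.
Qed.

Lemma deg_split S b (G : nat -> nat) : S \in VSK ->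
  \sum_(q in S) G (side b q) = \sum_(x : 'I_M | x < K) G x * W2 S b x.
Proof.
move=> hS; rewrite /W2.
rewrite (eq_bigr (fun x : 'I_M => \sum_(q in S) G x * (side b q == x))); last first.
  by move=> x _; rewrite big_distrr.
rewrite exchange_big /=; apply: eq_bigr => q hq.
rewrite (sum_delta_w (fun x : 'I_M => G x)).
by have /andP [h1 h2] := VS_elts hS hq; case: b; rewrite /side ?h1 ?h2 muln1.
Qed.

Lemma pair_delta (G : nat -> nat -> nat) (q : 'I_M * 'I_M) :
  \sum_(x : 'I_M | x < K) \sum_(y : 'I_M | y < K) G x y * ((q.1 == x) * (q.2 == y))
  = G q.1 q.2 * (q.1 < K) * (q.2 < K).
Proof.
rewrite (eq_bigr (fun x : 'I_M => (G x q.2 * (q.2 < K)) * (q.1 == x))); last first.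
  move=> x _.
  rewrite (eq_bigr (fun y : 'I_M => (G x y * (q.1 == x)) * (q.2 == y))); last first.
    by move=> y _; rewrite mulnA.
  rewrite (sum_delta_w (fun y : 'I_M => G x y * (q.1 == x))).
  by rewrite mulnAC.
by rewrite (sum_delta_w (fun x : 'I_M => G x q.2 * (q.2 < K))) mulnAC.
Qed.

Lemma pair_split S (G : nat -> nat -> nat) : S \in VSK ->
  \sum_(q in S) G q.1 q.2 =
  \sum_(x : 'I_M | x < K) \sum_(y : 'I_M | y < K) G x y * W1 S x y.
Proof.
move=> hS; rewrite /W1.
rewrite (eq_bigr (fun x : 'I_M => \sum_(q in S) \sum_(y : 'I_M | y < K)
      G x y * ((q.1 == x) * (q.2 == y)))); last first.
  move=> x _; rewrite exchange_big /=; apply: eq_bigr => y _.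
  by rewrite big_distrr.
rewrite exchange_big /=; apply: eq_bigr => q hq.
rewrite pair_delta.
by have /andP [h1 h2] := VS_elts hS hq; rewrite h1 h2 !muln1.
Qed.

Lemma pair_split3 S (G : nat -> nat -> nat) : S \in VSK ->
  \sum_(q in S) \sum_(q' in S) G (side true q) (side false q') =
  \sum_(x : 'I_M | x < K) \sum_(y : 'I_M | y < K)
      G x y * (W2 S true x * W2 S false y).
Proof.
move=> hS.
rewrite (eq_bigr (fun q => \sum_(y : 'I_M | y < K) G (side true q) y * W2 S false y));
  last by move=> q _; rewrite (deg_split false (G (side true q))).
rewrite exchange_big /=.
rewrite (eq_bigr (fun y : 'I_M => \sum_(x : 'I_M | x < K) (G x y * W2 S false y) * W2 S true x));
  last by move=> y _; rewrite (deg_split true (fun x => G x y * W2 S false y)).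
rewrite exchange_big /=; apply: eq_bigr => x _; apply: eq_bigr => y _.
by rewrite -mulnA [W2 _ _ y * _]mulnC.
Qed.

End Split.

Section Main.
Variables (k : nat -> nat) (L M : nat).
Hypotheses (kpos : forall n, 0 < k n) (kmono : forall n, k n <= k n.+1)
  (hM : forall l, l <= L -> k l <= M).
Local Notation cT := (cfg L M).
Local Notation V := (Vs k L M).
Local Notation "x ^ y" := (expn x y) : nat_scope.

Definition lowdep n (h : cT -> nat) :=
  (forall (o : 'I_L) c S, n <= o -> h (setS c o S) = h c) /\
  (forall o c a, h (setC c o a) = h c).

Lemma stepS (o : 'I_L) (I : finType) (P : pred I) (h : cT -> I -> nat)
    (W : {set 'I_M * 'I_M} -> I -> nat) (D E : nat) :
  (forall c S x, h (setS c o S) x = h c x) ->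
  (forall x, P x -> D * \sum_(S in VS M (k o) (k o.+1)) W S x
                    = E * #|VS M (k o) (k o.+1)|) ->
  D * \sum_(c in V) \sum_(x | P x) h c x * W (c.1 o) x
  = E * \sum_(x | P x) \sum_(c in V) h c x.
Proof.
move=> hh hW.
case: (set_0Vmem V) => [-> | [c0 hc0]].
  by rewrite big_set0 muln0 big1 ?muln0 // => x _; rewrite big_set0.
have hVn : 0 < #|VS M (k o) (k o.+1)|.
  apply/card_gt0P; exists (c0.1 o).
  by move: hc0; rewrite inE => /validP [h1 _]; apply: h1.
apply/eqP; rewrite -(eqn_pmul2l hVn); apply/eqP.
rewrite mulnCA (resampleS k (H := fun c S => \sum_(x | P x) h c x * W S x)); last first.
  by move=> c S S'; apply: eq_bigr => x _; rewrite hh.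
rewrite big_distrr /=.
transitivity (\sum_(c in V) \sum_(x | P x) h c x * (E * #|VS M (k o) (k o.+1)|)).
  apply: eq_bigr => c _; rewrite exchange_big /= big_distrr /=; apply: eq_bigr => x hx.
  by rewrite -(hW x hx) [RHS]mulnCA -big_distrr.
rewrite exchange_big /=.
rewrite (eq_bigr (fun x => (\sum_(c in V) h c x) * (E * #|VS M (k o) (k o.+1)|)));
  last by move=> x _; rewrite big_distrl.
rewrite -big_distrl /=.
by rewrite mulnC -mulnA [RHS]mulnCA.
Qed.


Lemma child_setS (c : cT) (o : 'I_L) S n b j : nat_of_ord o != n ->
  child (setS c o S) n b j = child c n b j.
Proof. by move=> h; rewrite /child pairs_setS eq_sym (negbTE h). Qed.

Lemma child_setC (c : cT) (o : 'I_L.+1) a n b j : child (setC c o a) n b j = child c n b j.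
Proof. by []. Qed.

Lemma bidx_ext (c c' : cT) f n kk :
  (forall l, n <= l -> pairs c l = pairs c' l /\ Cn c l = Cn c' l) ->
  bidx c f n kk = bidx c' f n kk.
Proof.
elim: f n kk => //= f IH n kk h.
have [e1 e2] := h n (leqnn n).
rewrite e2 (IH n.+1) => [|l hl]; last by apply: h; lia.
by rewrite /child e1.
Qed.

Lemma blk_setS (c : cT) (o : 'I_L) S n kk : o < n -> blk (setS c o S) n kk = blk c n kk.
Proof.
move=> h; apply: bidx_ext => l hl; split; last by [].
rewrite pairs_setS; case: eqP => // e; lia.
Qed.

Lemma blk_setC (c : cT) (o : 'I_L.+1) a n kk : o < n -> blk (setC c o a) n kk = blk c n kk.
Proof.
move=> h; apply: bidx_ext => l hl; split; first by [].
rewrite Cn_setC; case: eqP => // e; lia.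
Qed.

Lemma child_valid (c : cT) (o : 'I_L) b (g : nat -> nat) : c \in V ->
  \sum_(a : 'I_M | a < k o.+1) g (child c o b a)
  = \sum_(q in c.1 o) g (side b q).
Proof.
move=> hc; have hS : c.1 o \in VS M (k o) (k o.+1).
  by move: hc; rewrite inE => /validP [h1 _]; apply: h1.
rewrite /child pairsE.
rewrite (sum_child (fun p1 p2 => g (if b then p2 else p1)) _ hS).
  by apply: eq_bigr => q _; case: b.
by apply: hM; have := ltn_ord o; lia.
Qed.

Lemma Single kk : forall n (h : cT -> nat -> nat), 1 <= kk -> kk * 2 ^ n < 2 ^ L.+1 ->
  (forall a, lowdep n (h^~ a)) ->
  k n * \sum_(c in V) h c (blk c n kk) = \sum_(a : 'I_M | a < k n) \sum_(c in V) h c a.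
Proof.
elim/ltn_ind: kk => kk IH n h h1 h2 hd.
case: (leqP kk 1) => hk.
  have ek : kk = 1 by lia.
  subst kk; rewrite mul1n ltn_exp2l // in h2.
  pose o := (Ordinal h2 : 'I_L.+1).
  rewrite (eq_bigr (fun c => h c (c.2 o))); last by move=> c _; rewrite blk1 -CnE.
  rewrite (resampleC (o := o)); first by rewrite exchange_big.
    by apply: hM; rewrite /=; lia.
  by move=> c x a; have [_ ->] := hd x.
set p := kk./2; set b := odd kk.
have e := odd_double_half kk; rewrite -/p -/b in e.
have hp : 1 <= p by lia.
have hp2 : p * 2 ^ n.+1 < 2 ^ L.+1.
  rewrite expnS mulnA; apply: leq_ltn_trans h2; rewrite leq_mul2r; apply/orP; right; lia.
have hnL : n < L.
  have := leq_ltn_trans (leq_pmull _ hp) hp2.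
  by rewrite ltn_exp2l.
pose o := (Ordinal hnL : 'I_L).
have IH2 := IH p ltac:(lia) n.+1 (fun c a => h c (child c n b a)) hp hp2.
have hW : forall x : 'I_M, x < k n ->
  k n * \sum_(S in VS M (k o) (k o.+1)) W2 S b x = k n.+1 * #|VS M (k o) (k o.+1)|.
  by move=> x hx; apply: Sym2; rewrite /= ?hx //; apply: hM; lia.
have hh : forall c S (x : 'I_M), h (setS c o S) x = h c x.
  by move=> c S x; have [-> //] := hd x.
have ST := stepS (o := o) (P := fun x : 'I_M => x < k n) (h := fun c (x : 'I_M) => h c x)
  (W := fun S x => W2 S b x) (D := k n) (E := k n.+1) hh hW.
have : k n.+1 * (k n * \sum_(c in V) h c (blk c n kk)) =
       k n.+1 * \sum_(a : 'I_M | a < k n) \sum_(c in V) h c a.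
  rewrite -ST mulnCA; congr (k n * _).
  rewrite (eq_bigr (fun c => h c (child c n b (blk c n.+1 p)))); last first.
    by move=> c _; rewrite (blkS _ _ (_ : 2 <= kk)).
  rewrite IH2; last first.
    move=> a; split.
      move=> o' c S ho'; rewrite child_setS; last by apply/eqP; lia.
      by have [hS _] := hd (child c n b a); rewrite hS //; lia.
    by move=> o' c a'; rewrite child_setC; have [_ ->] := hd (child c n b a).
  rewrite exchange_big /=; apply: eq_bigr => c hc.
  rewrite (@child_valid c o b (h c)) //.
  rewrite (@deg_split M (k n) (k n.+1) _ b (h c)) //.
  by move: hc; rewrite inE => /validP [h3 _]; apply: h3.
by move/eqP; rewrite eqn_pmul2l // => /eqP.
Qed.

End Main.

Section Pair.
Variables (k : nat -> nat) (L M : nat).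
Hypotheses (kpos : forall n, 0 < k n) (kmono : forall n, k n <= k n.+1)
  (hM : forall l, l <= L -> k l <= M).
Local Notation cT := (cfg L M).
Local Notation V := (Vs k L M).
Local Notation "x ^ y" := (expn x y) : nat_scope.

Lemma blk_even (c : cT) n p : 1 <= p ->
  blk c n p.*2 = child c n false (blk c n.+1 p) /\
  blk c n (p.*2).+1 = child c n true (blk c n.+1 p).
Proof.
move=> hp; rewrite (blkS c n (_ : 2 <= p.*2)) ?(blkS c n (_ : 2 <= (p.*2).+1)); try lia.
have -> : (p.*2).+1 = true + p.*2 by lia.
rewrite -[p.*2]/(false + p.*2) !half_bit_double.
by rewrite !oddD !odd_double.
Qed.

Lemma blk_odd (c : cT) n p : 1 <= p ->
  blk c n (p.*2).+1 = child c n true (blk c n.+1 p) /\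
  blk c n (p.+1).*2 = child c n false (blk c n.+1 p.+1).
Proof.
move=> hp; rewrite (blkS c n (_ : 2 <= (p.*2).+1)) ?(blkS c n (_ : 2 <= (p.+1).*2)); try lia.
have -> : (p.*2).+1 = true + p.*2 by lia.
rewrite -[(p.+1).*2]/(false + (p.+1).*2) !half_bit_double.
by rewrite !oddD !odd_double.
Qed.

Lemma exists_half kk : exists p, kk = p.*2 \/ kk = (p.*2).+1.
Proof.
exists kk./2; have := odd_double_half kk; case: (odd kk) => /= e; lia.
Qed.

Lemma child_valid2 (c : cT) (o : 'I_L) (g : nat -> nat -> nat) : c \in V ->
  \sum_(a : 'I_M | a < k o.+1) g (child c o false a) (child c o true a)
  = \sum_(q in c.1 o) g q.1 q.2.
Proof.
move=> hc; have hS : c.1 o \in VS M (k o) (k o.+1).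
  by move: hc; rewrite inE => /validP [h1 _]; apply: h1.
rewrite /child pairsE (sum_child g _ hS) //.
by apply: hM; have := ltn_ord o; lia.
Qed.

Lemma lt_level n q : 2 <= q -> q * 2 ^ n < 2 ^ L.+1 -> n < L.
Proof.
move=> hq h; have : 2 ^ n.+1 < 2 ^ L.+1.
  apply: leq_ltn_trans h; rewrite expnS leq_mul2r hq orbT //.
by rewrite ltn_exp2l.
Qed.

Lemma lowdep_low n (h : cT -> nat) : lowdep n h ->
  forall (o : 'I_L) c S, n <= o -> h (setS c o S) = h c.
Proof. by case. Qed.

Lemma lowdep_C n (h : cT -> nat) : lowdep n h -> forall o c a, h (setC c o a) = h c.
Proof. by case. Qed.

Lemma Pair kk : forall n (h : cT -> nat -> nat -> nat), 1 <= kk ->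
  kk.+1 * 2 ^ n < 2 ^ L.+1 ->
  (forall a b, lowdep n (fun c => h c a b)) ->
  k n * k n * \sum_(c in V) h c (blk c n kk) (blk c n kk.+1)
  = \sum_(a : 'I_M | a < k n) \sum_(b : 'I_M | b < k n) \sum_(c in V) h c a b.
Proof.
elim/ltn_ind: kk => kk IH n h h1 h2 hd.
have hnL : n < L by apply: (lt_level (q := kk.+1)) => //; lia.
pose o := (Ordinal hnL : 'I_L).
have hh : forall c S (x : 'I_M * 'I_M), h (setS c o S) x.1 x.2 = h c x.1 x.2.
  by move=> c S x; rewrite (lowdep_low (hd x.1 x.2)).
have hkn : k n <= M by apply: hM; lia.
have [p [ekk|ekk]] := exists_half kk; subst kk.
-
  have hp : 1 <= p by lia.
  have hp2 : p * 2 ^ n.+1 < 2 ^ L.+1.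
    rewrite expnS mulnA muln2; apply: leq_ltn_trans h2; rewrite leq_mul2r; lia.
  pose h' := fun c a' => h c (child c n false a') (child c n true a').
  have S1 := @Single k L M kpos hM p n.+1 h' hp hp2.
  have hW : forall x : 'I_M * 'I_M, (x.1 < k n) && (x.2 < k n) ->
     k n * k n * \sum_(S in VS M (k o) (k o.+1)) W1 S x.1 x.2
     = k n.+1 * #|VS M (k o) (k o.+1)|.
    by move=> x /andP [hx hy]; apply: Sym1.
  have ST := stepS (o := o) (P := fun x : 'I_M * 'I_M => (x.1 < k n) && (x.2 < k n))
    (h := fun c x => h c x.1 x.2) (W := fun S x => W1 S x.1 x.2) hh hW.
  have : k n.+1 * (k n * k n * \sum_(c in V) h c (blk c n p.*2) (blk c n (p.*2).+1))
       = k n.+1 * \sum_(a : 'I_M | a < k n) \sum_(b : 'I_M | b < k n) \sum_(c in V) h c a b.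
    rewrite pair_big_dep /= -ST mulnCA; congr (_ * _).
    transitivity (k n.+1 * \sum_(c in V) h' c (blk c n.+1 p)).
      by congr (_ * _); apply: eq_bigr => c _; have [-> ->] := blk_even c n hp.
    rewrite S1; last first.
      move=> a; split.
        move=> o' c S ho'; rewrite /h' !child_setS; try (apply/eqP; lia).
        by rewrite (lowdep_low (hd _ _)) //; lia.
      by move=> o' c a'; rewrite /h' !child_setC (lowdep_C (hd _ _)).
    rewrite exchange_big /=; apply: eq_bigr => c hc.
    rewrite (@child_valid2 c o (h c)) //.
    rewrite (@pair_split M (k n) (k n.+1) _ (h c)) ?pair_big_dep //.
    by move: hc; rewrite inE => /validP [h3 _]; apply: h3.
  by move/eqP; rewrite eqn_pmul2l // => /eqP.
-
  case: (posnP p) => hp0.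
  + subst p; rewrite /=.
    have hn1 : n.+1 < L.+1 by lia.
    have hn0 : n < L.+1 by lia.
    pose oC1 := (Ordinal hn1 : 'I_L.+1); pose oC0 := (Ordinal hn0 : 'I_L.+1).
    have hk1 : k n.+1 <= M by apply: hM; lia.
    have RC1 := @resampleC k L M oC1 (fun c a' => h c (Cn c n) (child c n false a')) hk1.
    have RC0 := @resampleC k L M oC0
      (fun c a => \sum_(y : 'I_M | y < k n) h c a y * W2 (c.1 o) false y) hkn.
    have hW : forall x : 'I_M * 'I_M, (x.1 < k n) && (x.2 < k n) ->
       k n * \sum_(S in VS M (k o) (k o.+1)) W2 S false x.2
       = k n.+1 * #|VS M (k o) (k o.+1)|.
      by move=> x /andP [hx hy]; apply: Sym2.
    have ST := stepS (o := o) (P := fun x : 'I_M * 'I_M => (x.1 < k n) && (x.2 < k n))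
      (h := fun c x => h c x.1 x.2) (W := fun S x => W2 S false x.2) hh hW.
    have : k n.+1 * (k n * k n * \sum_(c in V) h c (blk c n 1) (blk c n 2))
       = k n.+1 * \sum_(a : 'I_M | a < k n) \sum_(b : 'I_M | b < k n) \sum_(c in V) h c a b.
      rewrite pair_big_dep /= -ST mulnCA -mulnA; congr (k n * _).
      transitivity (k n * \sum_(c in V) \sum_(y : 'I_M | y < k n)
           h c (c.2 oC0) y * W2 (c.1 o) false y).
        congr (_ * _).
        transitivity (k n.+1 * \sum_(c in V) h c (Cn c n) (child c n false (c.2 oC1))).
          congr (_ * _); apply: eq_bigr => c _.
          by rewrite -(CnE c oC1) (blkS c n (_ : 2 <= 2)).
        rewrite RC1; last first.
          move=> c x a; rewrite Cn_setC ifF; last by apply/eqP; rewrite /=; lia.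
          by rewrite child_setC (lowdep_C (hd _ _)).
        apply: eq_bigr => c hc.
        have hS : c.1 o \in VS M (k n) (k n.+1).
          by move: hc; rewrite inE => /validP [h3 _]; apply: h3.
        rewrite (@child_valid k L M hM c o false (h c (Cn c n))) //.
        by rewrite (@deg_split M (k n) (k n.+1) _ false) // -(CnE c oC0).
      rewrite RC0; last first.
        by move=> c x a; apply: eq_bigr => y _; rewrite (lowdep_C (hd _ _)).
      by apply: eq_bigr => c _; rewrite pair_big_dep.
    by move/eqP; rewrite eqn_pmul2l // => /eqP.
  have hp : 1 <= p by lia.
  have hp2 : p.+1 * 2 ^ n.+1 < 2 ^ L.+1.
    by rewrite expnS mulnA muln2 doubleS.
  pose h' := fun c a' b' => h c (child c n true a') (child c n false b').
  have IH2 := IH p ltac:(lia) n.+1 h' hp hp2.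
  have hW : forall x : 'I_M * 'I_M, (x.1 < k n) && (x.2 < k n) ->
     k n * k n * \sum_(S in VS M (k o) (k o.+1)) (W2 S true x.1 * W2 S false x.2)
     = k n.+1 * k n.+1 * #|VS M (k o) (k o.+1)|.
    by move=> x /andP [hx hy]; apply: Sym3.
  have ST := stepS (o := o) (P := fun x : 'I_M * 'I_M => (x.1 < k n) && (x.2 < k n))
    (h := fun c x => h c x.1 x.2) (W := fun S x => W2 S true x.1 * W2 S false x.2) hh hW.
  have : k n.+1 * k n.+1 * (k n * k n * \sum_(c in V) h c (blk c n (p.*2).+1) (blk c n (p.*2).+2))
       = k n.+1 * k n.+1 * \sum_(a : 'I_M | a < k n) \sum_(b : 'I_M | b < k n) \sum_(c in V) h c a b.
    rewrite pair_big_dep /= -ST mulnCA; congr (_ * _).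
    transitivity (k n.+1 * k n.+1 * \sum_(c in V) h' c (blk c n.+1 p) (blk c n.+1 p.+1)).
      by congr (_ * _); apply: eq_bigr => c _; rewrite -doubleS; have [-> ->] := blk_odd c n hp.
    rewrite IH2; last first.
      move=> a b; split.
        move=> o' c S ho'; rewrite /h' !child_setS; try (apply/eqP; lia).
        by rewrite (lowdep_low (hd _ _)) //; lia.
      by move=> o' c a'; rewrite /h' !child_setC (lowdep_C (hd _ _)).
    rewrite (eq_bigr (fun a : 'I_M => \sum_(c in V) \sum_(b : 'I_M | b < k n.+1) h' c a b));
      last by move=> a _; rewrite exchange_big.
    rewrite exchange_big /=; apply: eq_bigr => c hc.
    have hS : c.1 o \in VS M (k n) (k n.+1).
      by move: hc; rewrite inE => /validP [h3 _]; apply: h3.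
    rewrite /h'.
    rewrite (eq_bigr (fun a : 'I_M => \sum_(q in c.1 o) h c (child c n true a) (side false q)));
      last by move=> a _; rewrite (@child_valid k L M hM c o false (h c (child c n true a))).
    rewrite (@child_valid k L M hM c o true (fun z => \sum_(q in c.1 o) h c z (side false q))) //.
    by rewrite (@pair_split3 M (k n) (k n.+1) _ (h c)) ?pair_big_dep.
  by move/eqP; rewrite eqn_pmul2l ?muln_gt0 ?kpos // => /eqP.
Qed.

End Pair.


Lemma lexle_total : total lexle.
Proof. move=> [a b] [c d]; rewrite /lexle /=; lia. Qed.
Lemma lexle_trans : transitive lexle.
Proof. move=> [a b] [c d] [e f]; rewrite /lexle /=; lia. Qed.
Lemma lexle_anti : antisymmetric lexle.
Proof.
move=> [a b] [c d]; rewrite /lexle /= => h.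
have e1 : a = c by lia.
have e2 : b = d by lia.
by rewrite e1 e2.
Qed.

Section Cast.
Variables (M K k' : nat).
Hypothesis hK : K <= M.

Definition iota_ (q : 'I_K * 'I_K) : 'I_M * 'I_M := (widen_ord hK q.1, widen_ord hK q.2).
Lemma iota_inj : injective iota_.
Proof. by move=> [a b] [c d] [/val_inj -> /val_inj ->]. Qed.
Definition phiK (S : {set 'I_K * 'I_K}) : {set 'I_M * 'I_M} := iota_ @: S.

Lemma natlist_phiK S : natlist (phiK S) = natlist S.
Proof.
apply/perm_sortP; [exact: lexle_total | exact: lexle_trans | exact: lexle_anti |].
apply: uniq_perm.
- rewrite map_inj_in_uniq ?enum_uniq //.
  by move=> [a b] [c d] _ _ [/val_inj -> /val_inj ->].
- rewrite map_inj_in_uniq ?enum_uniq //.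
  by move=> [a b] [c d] _ _ [/val_inj -> /val_inj ->].
move=> [a b]; apply/mapP/mapP => [[p] | [q]].
  rewrite mem_enum => /imsetP [q hq ->] [-> ->].
  by exists q; rewrite ?mem_enum.
rewrite mem_enum => hq [-> ->]; exists (iota_ q) => //.
by rewrite mem_enum; apply: imset_f.
Qed.

Lemma VS_phiK : VS M K k' = phiK @: [set S : {set 'I_K * 'I_K} | #|S| == k'].
Proof.
apply/setP => S'; apply/idP/imsetP.
  move=> hS'.
  have E : phiK [set q | iota_ q \in S'] = S'.
    apply/setP => p; apply/imsetP/idP => [[q] | hp].
      by rewrite inE => hq ->.
    have /andP [h1 h2] := VS_elts hS' hp.
    have ep : p = iota_ (Ordinal h1, Ordinal h2).
      by move: hp h1 h2; case: p => [a b] /= _ h1 h2; congr pair; apply/val_inj.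
    by exists (Ordinal h1, Ordinal h2); rewrite // inE -ep.
  exists [set q | iota_ q \in S']; last by rewrite E.
  by rewrite inE -(VS_card hS') -{2}E /phiK card_imset //; exact: iota_inj.
case=> S; rewrite inE => /eqP hc ->; rewrite inE; apply/andP; split.
  by apply/forallP => p; apply/implyP => /imsetP [q _ ->] /=; rewrite !ltn_ord.
by rewrite card_imset ?hc //; exact: iota_inj.
Qed.

Lemma cast_sum (g : seq (nat * nat) -> nat) :
  \sum_(S in VS M K k') g (natlist S)
  = \sum_(S : {set 'I_K * 'I_K} | #|S| == k') g (natlist S).
Proof.
rewrite VS_phiK big_imset /=; last by move=> S1 S2 _ _; apply: imset_inj; exact: iota_inj.
by apply: eq_big => S; rewrite ?inE // => _; rewrite natlist_phiK.
Qed.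

Lemma cast_card : #|VS M K k'| = #|[set S : {set 'I_K * 'I_K} | #|S| == k']|.
Proof.
rewrite -!sum1_card (cast_sum (fun _ => 1)).
by apply: eq_bigl => S; rewrite inE.
Qed.

Lemma exists_VS : k' <= K * K -> exists S, S \in VS M K k'.
Proof.
move=> hk.
pose A := [set p : 'I_M * 'I_M | (p.1 < K) && (p.2 < K)].
have hA : #|A| = K * K.
  have -> : A = setX (DC M K) (DC M K) by apply/setP => p; rewrite !inE.
  by rewrite cardsX cardDC.
exists [set p in take k' (enum A)].
rewrite inE; apply/andP; split.
  apply/forallP => p; apply/implyP; rewrite inE => /mem_take.
  by rewrite mem_enum inE.
rewrite cardsE; apply/eqP; move: (take_uniq k' (enum_uniq (mem A))) => /card_uniqP ->.
by rewrite size_take -cardE hA; case: ltnP => //; lia.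
Qed.
End Cast.


Fixpoint Yp (ps : nat -> seq (nat * nat)) (n j : nat) : seq nat :=
  match n with
  | 0 => [:: j.+1]
  | n'.+1 => let p := nth (0, 0) (ps n') j in Yp ps n' p.1 ++ Yp ps n' p.2
  end.

Lemma YE L M (c : cfg L M) n j : Y c n j = Yp (pairs c) n j.
Proof. by elim: n j => //= n IH j; rewrite !IH. Qed.

Lemma Yp_ext ps ps' n j : (forall l, l < n -> ps l = ps' l) -> Yp ps n j = Yp ps' n j.
Proof.
elim: n j => //= n IH j h.
rewrite (h n (ltnSn n)) !IH // => l hl; apply: h; lia.
Qed.

Definition upd (ps : nat -> seq (nat * nat)) n s := fun l => if l == n then s else ps l.
Definition dep n (F : (nat -> seq (nat * nat)) -> nat) :=
  forall ps ps', (forall l, l < n -> ps l = ps' l) -> F ps = F ps'.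

Section Canon.
Variable k : nat -> nat.
Definition VSc l := [set S : {set 'I_(k l) * 'I_(k l)} | #|S| == k l.+1].
Fixpoint Gc n (F : (nat -> seq (nat * nat)) -> nat) : nat :=
  match n with
  | 0 => F (fun _ => [::])
  | n'.+1 => Gc n' (fun ps => \sum_(S in VSc n') F (upd ps n' (natlist S)))
  end.
Definition Dc n := \prod_(l < n) #|VSc l|.

Variables L M : nat.
Hypothesis hM : forall l, l <= L -> k l <= M.
Local Notation V := (Vs k L M).

Lemma canon n F : n <= L -> dep n F ->
  Dc n * \sum_(c in V) F (pairs c) = Gc n F * #|V|.
Proof.
elim: n F => [|n IH] F hn hF.
  rewrite /Dc big_ord0 mul1n /= (eq_bigr (fun _ => F (fun _ => [::]))).
    by rewrite sum_nat_const mulnC.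
  by move=> c _; apply: hF => l; rewrite ltn0.
have hnL : n < L by lia.
pose o := (Ordinal hnL : 'I_L).
pose F' := fun ps => \sum_(S in VSc n) F (upd ps n (natlist S)).
have hF' : dep n F'.
  move=> ps ps' h; apply: eq_bigr => S _; apply: hF => l hl; rewrite /upd.
  by case: eqP => // ne; apply: h; lia.
have key : #|VSc n| * \sum_(c in V) F (pairs c) = \sum_(c in V) F' (pairs c).
  have hkn : k n <= M by apply: hM; lia.
  rewrite /VSc -(cast_card (k n.+1) hkn).
  rewrite (eq_bigr (fun c => F (upd (pairs c) n (natlist (c.1 o))))); last first.
    move=> c _; apply: hF => l hl; rewrite /upd; case: eqP => [->|] //.
    by rewrite (pairsE c o).
  rewrite (resampleS k (o := o) (H := fun c S => F (upd (pairs c) n (natlist S)))).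
    apply: eq_bigr => c _; rewrite /F'.
    rewrite (cast_sum (k n.+1) hkn (fun s => F (upd (pairs c) n s))) /=.
    by apply: eq_bigl => S; rewrite inE.
  move=> c S S'; apply: hF => l hl; rewrite /upd pairs_setS.
  by case: eqP => // ne; case: eqP => // e; exfalso; apply: ne; rewrite e.
rewrite /Dc big_ord_recr /= -/(Dc n) -mulnA key IH //; lia.
Qed.
End Canon.


Lemma powE a b : Nat.pow a b = expn a b.
Proof. elim: b => // b IH; rewrite expnS -IH /=. by rewrite mulnE. Qed.

Lemma ratio_eq (a b c d : nat) : 0 < b -> 0 < d -> a * d = c * b ->
  Rdiv (INR a) (INR b) = Rdiv (INR c) (INR d).
Proof.
move=> hb hd e.
have e' : (INR a * INR d = INR c * INR b)%R by rewrite -!mult_INR; congr INR.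
have hb' : INR b <> 0%R by apply: not_0_INR; lia.
have hd' : INR d <> 0%R by apply: not_0_INR; lia.
by field_simplify_eq => //; rewrite e' Rmult_comm.
Qed.

Lemma card_sum (T : finType) (A : {set T}) (P : pred T) :
  #|[set c | (c \in A) && P c]| = \sum_(c in A) (P c : nat).
Proof.
rewrite -sum1_card (eq_bigl (fun c => (c \in A) && P c)); last by move=> c; rewrite inE.
rewrite big_mkcondr /=; apply: eq_bigr => c _; by case: (P c).
Qed.

Section Final.
Variable k : nat -> nat.
Hypotheses (kpos : forall n, 0 < k n) (kmono : forall n, k n <= k n.+1)
  (ksq : forall n, k n.+1 <= k n * k n).
Local Notation "x ^ y" := (expn x y) : nat_scope.

Lemma V_pos L M : (forall l, l <= L -> k l <= M) -> 0 < #|Vs k L M|.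
Proof.
move=> hM.
have hM0 : 0 < M by apply: leq_trans (kpos 0) (hM 0 _).
have hex : forall o : 'I_L, exists S, S \in VS M (k o) (k o.+1).
  move=> o; apply: exists_VS => //; apply: hM; have := ltn_ord o; lia.
pose c : cfg L M := ([ffun o : 'I_L => odflt set0 [pick S in VS M (k o) (k o.+1)]],
                     [ffun _ : 'I_L.+1 => Ordinal hM0]).
apply/card_gt0P; exists c; rewrite inE; apply/validP; split => o.
  rewrite /c /= ffunE; case: pickP => //= hn.
  by have [S hS] := hex o; move: (hn S); rewrite hS.
by rewrite /c /= ffunE inE /=.
Qed.

Lemma Dc_pos n : 0 < Dc k n.
Proof.
apply: prodn_gt0 => l.
rewrite /VSc -(cast_card (k l.+1) (leqnn (k l))).
have [S hS] := @exists_VS (k l) (k l) (k l.+1) (leqnn (k l)) (ksq l).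
by apply/card_gt0P; exists S.
Qed.

Definition Fab n j m x a b := fun ps : nat -> seq (nat * nat) =>
  (take m (drop j (Yp ps n a ++ Yp ps n b)) == x : nat).
Definition Num n j m x := \sum_(a < k n) \sum_(b < k n) Gc k n (Fab n j m x a b).
Definition Den n := k n * k n * Dc k n.

Lemma Pwin_formula n kk j x : 1 <= kk -> j < 2 ^ n -> 1 <= size x <= 2 ^ n ->
  Pwin k (kk * 2 ^ n + j) x = Rdiv (INR (Num n j (size x) x)) (INR (Den n)).
Proof.
move=> hkk hj hm; rewrite /Pwin.
set L := (kk * 2 ^ n + j + size x).
set M := (\max_(l < L.+1) k l).
set m := size x.
have hM : forall l, l <= L -> k l <= M.
  move=> l hl; have hl2 : l < L.+1 by lia. exact: (@leq_bigmax _ (fun l : 'I_L.+1 => k l) (Ordinal hl2)).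
have hpos := expn_gt0 2 n.
have hlev : kk.+1 * 2 ^ n < 2 ^ L.+1.
  have h1 : kk.+1 <= 2 ^ kk by apply: ltn_expl.
  have h2 : n < 2 ^ n by apply: ltn_expl.
  apply: (leq_ltn_trans (_ : _ <= 2 ^ (kk + n))).
    by rewrite expnD leq_mul2r h1 orbT.
  rewrite ltn_exp2l //.
  have : kk + n <= kk * 2 ^ n.
    have : (kk - 1) * (2 ^ n - 1) >= 0 by [].
    nia.
  rewrite /L; lia.
have hnL : n <= L.
  have := ltn_expl n (ltnSn 1); rewrite /L; nia.
apply: ratio_eq; [exact: V_pos | by rewrite /Den !muln_gt0 !kpos Dc_pos |].
pose h := fun (c : cfg L M) (a b : nat) => Fab n j m x a b (pairs c).
have hcount : #|[set c : cfg L M | valid k c && (window c (kk * 2 ^ n + j) m == x)]|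
   = \sum_(c in Vs k L M) h c (blk c n kk) (blk c n kk.+1).
  transitivity (\sum_(c in Vs k L M) (window c (kk * 2 ^ n + j) m == x : nat)).
    rewrite -(card_sum (Vs k L M) (fun c => window c (kk * 2 ^ n + j) m == x)).
    by apply: eq_card => c; rewrite !inE.
  apply: eq_bigr => c _.
  by rewrite (window_blk c hkk hj _ hlev) ?hm // /h /Fab !YE.
have hld : forall a b, lowdep n (fun c : cfg L M => h c a b).
  move=> a b; split; last by [].
  move=> o c S ho; rewrite /h /Fab.
  by rewrite !(@Yp_ext (pairs (setS c o S)) (pairs c) n) // => l hl;
    rewrite pairs_setS; case: eqP => // e; lia.
have hP := @Pair k L M kpos hM kk n h hkk hlev hld.
have hkn : k n <= M by apply: hM.
have hC : forall a b, Dc k n * \sum_(c in Vs k L M) h c a b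
                      = Gc k n (Fab n j m x a b) * #|Vs k L M|.
  move=> a b; apply: (@canon k L M hM n (Fab n j m x a b) hnL).
  move=> ps ps' hps; rewrite /Fab.
  by rewrite !(@Yp_ext ps ps' n).
rewrite hcount /Den.
set S0 := \sum_(c in Vs k L M) _.
have -> : S0 * (k n * k n * Dc k n) = Dc k n * (k n * k n * S0).
  by rewrite mulnC mulnAC mulnC.
rewrite /S0 hP big_distrr /=.
rewrite /Num (big_ord_widen M (fun a => \sum_(b < k n) Gc k n (Fab n j m x a b)) hkn).
rewrite big_distrl /=; apply: eq_bigr => a ha.
rewrite (big_ord_widen M (fun b => Gc k n (Fab n j m x a b)) hkn).
rewrite big_distrr big_distrl /=; apply: eq_bigr => b hb.
by rewrite hC.
Qed.
End Final.


Section RealPart.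
Local Open Scope R_scope.

Lemma sumR_ext (f g : nat -> R) (N : nat) : (forall t, (t < N)%nat -> f t = g t) -> sumR f N = sumR g N.
Proof.
elim: N => //= N IH h; rewrite IH ?h // => t ht; apply: h; lia.
Qed.

Lemma sumR_split (f : nat -> R) (a b : nat) : sumR f (a + b)%nat = sumR f a + sumR (fun t => f (a + t)%nat) b.
Proof.
elim: b => [|b IH] /=; first by rewrite addn0 Rplus_0_r.
by rewrite addnS /= IH Rplus_assoc.
Qed.

Lemma sumR_shift (f : nat -> R) (N : nat) : sumR f N.+1 = f 0%nat + sumR (fun t => f t.+1) N.
Proof.
have -> : N.+1 = (1 + N)%nat by lia.
by rewrite sumR_split /= Rplus_0_l.
Qed.

Lemma sumR_bound (f : nat -> R) (N : nat) : (forall t, 0 <= f t <= 1) -> 0 <= sumR f N <= INR N.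
Proof.
move=> h; elim: N => [|N IH]; first by rewrite /=; lra.
rewrite [sumR f N.+1]/= S_INR; have := h N; lra.
Qed.

Lemma cesaro (P : nat -> R) (B : nat) (mu : R) : (0 < B)%nat ->
  (forall t, 0 <= P t <= 1) ->
  (forall q, (1 <= q)%nat -> sumR (fun j => P (q * B + j)%nat) B = INR B * mu) ->
  Un_cv (fun N => Rmult (Rinv (INR N)) (sumR (fun t => P t.+1) N)) mu.
Proof.
move=> hB hP hq.
have blocks : forall q, sumR P (q.+1 * B)%nat = sumR P B + INR q * (INR B * mu).
  elim=> [|q IH]; first by rewrite mul1n /=; lra.
  rewrite mulSnr sumR_split IH hq // S_INR; ring.
have hmu := Rabs_pos mu.
have hmu1 := Rle_abs mu.
have hmu2 : - mu <= Rabs mu by rewrite -Rabs_Ropp; apply: Rle_abs.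
have hBr : 0 < INR B by apply: lt_0_INR; lia.
set K0 := 2 * INR B * (1 + Rabs mu).
have prod_b : forall r, (r <= B)%nat -> - (INR B * Rabs mu) <= INR r * mu <= INR B * Rabs mu.
  move=> r hr; have h1 : INR r <= INR B by apply: le_INR; lia.
  have h0 := pos_INR r.
  split; nra.
have bound : forall N, - K0 <= sumR P N - INR N * mu <= K0.
  move=> N; have eN := divn_eq N B; have hr := ltn_pmod N hB.
  set q := (N %/ B)%nat in eN; set r := (N %% B)%nat in eN hr.
  have hpr := prod_b r (ltnW hr).
  have hr' : INR r <= INR B by apply: le_INR; lia.
  case: (posnP q) => hq0.
    rewrite hq0 mul0n add0n in eN; rewrite eN.
    have := sumR_bound r hP; rewrite /K0; nra.
  have [q' eq'] : exists q', q = q'.+1 by exists q.-1; lia.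
  rewrite eN eq' sumR_split blocks.
  have h1 := sumR_bound B hP.
  have h2 := sumR_bound (f := fun t => P (q'.+1 * B + t)%nat) r (fun t => hP _).
  have hpB := prod_b B (leqnn B).
  rewrite plus_INR mult_INR S_INR /K0.
  have -> : ((INR q' + 1) * INR B + INR r) * mu
           = INR q' * (INR B * mu) + INR B * mu + INR r * mu by ring.
  move: h1 h2 hpB hpr hr'; set sB := sumR P B; set sr := sumR _ r.
  set X := INR B * mu; set Y := INR r * mu; set Z := INR B * Rabs mu.
  have -> : 2 * INR B * (1 + Rabs mu) = 2 * INR B + 2 * Z by rewrite /Z; ring.
  lra.
move=> eps heps.
set K1 := K0 + Rabs mu + 1.
have hK1 : 0 < K1 by rewrite /K1 /K0; nra.
have [N0 [hN0 hN0p]] := archimed_cor1 (eps / K1) ltac:(apply: Rdiv_lt_0_compat; lra).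
exists N0 => n hn.
have hn1 : (0 < n)%nat by apply/ltP; lia.
have hnr : 0 < INR n by apply: lt_0_INR; apply/ltP.
rewrite /R_dist.
have e : / INR n * sumR (fun t => P t.+1) n - mu
       = / INR n * ((sumR P n.+1 - INR n.+1 * mu) + mu - P 0%nat).
  rewrite sumR_shift S_INR; field; lra.
rewrite e Rabs_mult Rabs_inv (Rabs_pos_eq (INR n)); last lra.
have hb := bound n.+1; have := hP 0%nat => hp0.
have hX : Rabs (sumR P n.+1 - INR n.+1 * mu + mu - P 0%nat) <= K1.
  apply: Rabs_le; rewrite /K1; split; lra.
have hle : / INR n <= / INR N0.
  apply: Rinv_le_contravar; first by apply: lt_0_INR.
  by apply: le_INR.
have : / INR N0 * K1 < eps.
  have := Rmult_lt_compat_r K1 _ _ hK1 hN0.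
  by rewrite /Rdiv Rmult_assoc Rinv_l ?Rmult_1_r; lra.
have := Rabs_pos (sumR P n.+1 - INR n.+1 * mu + mu - P 0%nat).
have := Rinv_0_lt_compat _ hnr.
nra.
Qed.

End RealPart.


Lemma Pwin_bounds k i x : (0 <= Pwin k i x <= 1)%R.
Proof.
rewrite /Pwin.
set L := (i + size x)%nat; set M := (\max_(l < L.+1) k l)%nat.
set a := #|[set c : cfg L M | valid k c && _]|.
set b := #|[set c : cfg L M | valid k c]|.
have hab : (a <= b)%nat.
  by apply: subset_leq_card; apply/subsetP => c; rewrite !inE => /andP [].
have ha := pos_INR a.
case: (posnP b) => hb.
  by rewrite hb /= /Rdiv Rinv_0 Rmult_0_r; lra.
have hbr : (0 < INR b)%R by apply: lt_0_INR; apply/ltP.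
have hle : (INR a <= INR b)%R by apply: le_INR; apply/leP.
split.
  by apply: Rmult_le_pos => //; apply: Rlt_le; apply: Rinv_0_lt_compat.
apply: (Rmult_le_reg_r (INR b)) => //.
by rewrite /Rdiv Rmult_assoc Rinv_l ?Rmult_1_r ?Rmult_1_l //; lra.
Qed.

Section Thm.
Local Notation "x ^ y" := (expn x y) : nat_scope.

Lemma main (k : nat -> nat) (kpos : forall n, (0 < k n)%nat)
  (kmono : forall n, (k n <= k n.+1)%nat) (ksq : forall n, (k n.+1 <= k n * k n)%nat)
  (m : nat) (x : seq nat) : (1 <= m)%nat -> size x = m ->
  exists mu : R,
    Un_cv (fun N => Rmult (Rinv (INR N)) (sumR (fun t => Pwin k t.+1 x) N)) mu
    /\ forall (n kk : nat), (m <= 2 ^ n)%nat -> (1 <= kk)%nat ->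
         mu = Rmult (Rinv (INR (2 ^ n)))
                    (sumR (fun j => Pwin k (kk * 2 ^ n + j) x) (2 ^ n)).
Proof.
move=> hm hsz.
pose S n kk := sumR (fun j => Pwin k (kk * 2 ^ n + j) x) (2 ^ n).
have Sc : forall n kk, (m <= 2 ^ n)%nat -> (1 <= kk)%nat -> S n kk = S n 1.
  move=> n kk hn hkk; apply: sumR_ext => j hj.
  rewrite !(Pwin_formula kpos ksq) //; by rewrite hsz hm.
have Sd : forall n, (m <= 2 ^ n)%nat -> S n.+1 1%nat = (2 * S n 1%nat)%R.
  move=> n hn.
  transitivity (S n 2%nat + S n 3%nat)%R.
    rewrite /S.
    have -> : (2 ^ n.+1 = 2 ^ n + 2 ^ n)%nat by rewrite expnS; lia.
    rewrite sumR_split; congr Rplus; apply: sumR_ext => j _; congr Pwin; lia.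
  rewrite (Sc n 2) // (Sc n 3) //; ring.
pose mu := (S m 1%nat / INR (2 ^ m))%R.
have hm2 : (m <= 2 ^ m)%nat by apply/ltnW/ltn_expl.
have h2 : INR 2 = 2%R by rewrite /=; lra.
have Sn : forall d n, (m <= 2 ^ n)%nat ->
    (S (n + d)%nat 1%nat / INR (2 ^ (n + d)) = S n 1%nat / INR (2 ^ n))%R.
  elim=> [|d IH] n hn; first by rewrite addn0.
  rewrite addnS Sd; last by apply: leq_trans hn _; rewrite leq_exp2l // leq_addr.
  rewrite expnS mult_INR -(IH n hn) h2.
  have : INR (2 ^ (n + d)) <> 0%R by apply: not_0_INR; have := expn_gt0 2 (n + d); lia.
  move=> hne; field; auto.
have mun : forall n, (m <= 2 ^ n)%nat -> mu = (S n 1%nat / INR (2 ^ n))%R.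
  move=> n hn; rewrite /mu; case: (leqP n m) => h.
    by have := Sn (m - n)%nat n hn; rewrite subnKC.
  by have := Sn (n - m)%nat m hm2; rewrite subnKC ?(ltnW h) // => <-.
have hne : forall n, INR (2 ^ n) <> 0%R.
  by move=> n; apply: not_0_INR; have := expn_gt0 2 n; lia.
exists mu; split.
  apply: (cesaro (P := fun t => Pwin k t x) (B := 2 ^ m)).
  - exact: expn_gt0.
  - by move=> t; apply: Pwin_bounds.
  - move=> q hq; change (S m q = INR (2 ^ m) * mu)%R.
    rewrite Sc // /mu; field; apply: hne.
move=> n kk hn hkk; rewrite (mun n hn).
change (S n 1%nat / INR (2 ^ n) = / INR (2 ^ n) * S n kk)%R.
by rewrite (Sc n kk) // /Rdiv Rmult_comm.
Qed.
End Thm.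


Theorem theorem4 (k : nat -> nat)
  (k_pos : forall n, (0 < k n)%N)
  (k_grow : forall n, (k n <= k n.+1)%N /\ (k n.+1 <= (k n) ^ 2)%N) :
  forall (m : nat) (x : seq nat),
    (1 <= m)%N -> size x = m ->
    all (fun a => (1 <= a)%N && (a <= k 0)%N) x ->
    exists mu : R,
      Un_cv (fun N => Rmult (Rinv (INR N)) (sumR (fun t => Pwin k t.+1 x) N)) mu
      /\ forall (n kk : nat), (m <= 2 ^ n)%N -> (1 <= kk)%N ->
           mu = Rmult (Rinv (INR (2 ^ n)))
                      (sumR (fun j => Pwin k (kk * 2 ^ n + j) x) (2 ^ n)).
Proof.
move=> m x hm hsz _.
have kmono : forall n, (k n <= k n.+1)%nat by move=> n; exact: (k_grow n).1.
have ksq : forall n, (k n.+1 <= k n * k n)%nat.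
  by move=> n; have := (k_grow n).2; rewrite powE expnS expn1.
have [mu [h1 h2]] := main k_pos kmono ksq hm hsz.
exists mu; split => // n kk hn hkk.
rewrite powE in hn; rewrite !powE.
exact: h2.
Qed.
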